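(* Let $\lambda$ be a nonzero real number. For any integer $p\ge1$, \[ \sum_{k=1}^{\infty}\frac{H_{k,\lambda}^{(p)}}{k(k+1)}=\zeta_{\lambda}(p+1), \] and \[ \sum_{k=1}^{\infty}\frac{H_{k,\lambda}^{(p)}}{k(k+2)}=\frac{1}{2}\bigg(\zeta_{\lambda}(p+1)+\sum_{k=2}^{p}(-1)^{k}\zeta_{\lambda}(p+2-k)+\frac{(-1)^{p+1}}{\lambda+1}\bigg), \] i.e. $\frac12\big(\zeta_{\lambda}(p+1)+\zeta_{\lambda}(p)-\zeta_{\lambda}(p-1)+\cdots+(-1)^{p}\zeta_{\lambda}(2)+\frac{(-1)^{p+1}}{\lambda+1}\big)$.
   Context: For real $x$ and $\mu\neq 0$, set $(x)_{0,\mu}=1$ and $(x)_{n,\mu}=x(x-\mu)\cdots(x-(n-1)\mu)$ for $n\ge1$. The degenerate zeta function is $\zeta_{\lambda}(s)=\sum_{n=1}^{\infty}\frac{(-1)^{n-1}\lambda^{n-1}(1)_{n,1/\lambda}}{(n-1)!\,n^{s}}$ for $\mathrm{Re}(s)>1$. The degenerate higher-order harmonic numbers are $H_{0,\lambda}^{(k)}=0$ and $H_{n,\lambda}^{(k)}=\sum_{l=1}^{n}\frac{(-\lambda)^{l-1}(1)_{l,1/\lambda}}{l^{k}(l-1)!}$ for $n\ge1$.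
   Formalization: The first identity assumes that the series defining $\zeta_{\lambda}(p+1)$ converges, and the second that the series defining $\zeta_{\lambda}(s)$ converges for every integer s with 2 ≤ s ≤ p+1. The statement above fails without it. *)

(* Defs.v *)
From Stdlib Require Import Reals Factorial.
From Coquelicot Require Import Coquelicot.
Open Scope R_scope.

Fixpoint dfall (x mu : R) (n : nat) : R :=
  match n with
  | O => 1
  | S m => dfall x mu m * (x - INR m * mu)
  end.

Definition zcoef (lam : R) (n : nat) : R :=
  (-1) ^ (n - 1) * lam ^ (n - 1) * dfall 1 (/ lam) n / INR (fact (n - 1)).

Definition zeta_term (lam : R) (s : nat) (n : nat) : R :=
  zcoef lam n / INR n ^ s.

Definition zeta_lam (lam : R) (s : nat) : R :=
  Series (fun n => zeta_term lam s (S n)).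

Fixpoint harm (lam : R) (k : nat) (n : nat) : R :=
  match n with
  | O => 0
  | S m => harm lam k m + zcoef lam (S m) / INR (S m) ^ k
  end.

(* Main.v *)
Require Import Defs.
From Stdlib Require Import Reals Lra Lia Factorial.
From Coquelicot Require Import Coquelicot.
Open Scope R_scope.

Lemma INRS_pos k : 0 < INR (S k).
Proof. apply lt_0_INR; lia. Qed.

Ltac posall := repeat match goal with |- context [INR ?n] =>
  lazymatch goal with H : 0 <= INR n |- _ => fail | _ => pose proof (pos_INR n) end end.
Ltac toR := match goal with |- ?a = ?b => change (@eq R a b) end.
Ltac nz := repeat split; try apply pow_nonzero; rewrite ?S_INR; posall; lra.

Lemma lim_invS : is_lim_seq (fun n => / INR (S n)) 0.
Proof.
  assert (H := is_lim_seq_INR).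
  apply is_lim_seq_incr_1 in H.
  pose proof (is_lim_seq_inv _ _ H ltac:(discriminate)) as H2.
  simpl in H2. exact H2.
Qed.

Lemma lim_ratio k : is_lim_seq (fun n => INR (S n) / INR (S n + k)) 1.
Proof.
  assert (H : is_lim_seq (fun n => / INR (S (n + k))) 0).
  { apply (is_lim_seq_incr_n (fun n => / INR (S n)) k 0). exact lim_invS. }
  pose proof (is_lim_seq_mult' (fun _ => INR k) _ (INR k) 0 (is_lim_seq_const _) H) as H'.
  pose proof (is_lim_seq_minus' (fun _ => 1) _ 1 _ (is_lim_seq_const _) H') as H''.
  replace (1 - INR k * 0) with 1 in H'' by ring.
  eapply is_lim_seq_ext; [|exact H'']. intro n. cbv beta.
  replace (S n + k)%nat with (S (n + k)) by lia.
  rewrite !S_INR, plus_INR. field. nz.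
Qed.

Lemma zc1 lam : lam <> 0 -> zcoef lam 1 = 1.
Proof. intro. unfold zcoef; simpl. field. exact H. Qed.

Lemma zcS lam n : lam <> 0 ->
  zcoef lam (S (S n)) = zcoef lam (S n) * (1 - lam / INR (S n)).
Proof.
  intro Hl. unfold zcoef.
  replace (S (S n) - 1)%nat with (S n) by lia.
  replace (S n - 1)%nat with n by lia.
  change (dfall 1 (/lam) (S (S n))) with (dfall 1 (/lam) (S n) * (1 - INR (S n) * / lam)).
  rewrite fact_simpl, mult_INR.
  change ((-1) ^ (S n)) with (-1 * (-1)^n).
  change (lam ^ (S n)) with (lam * lam ^ n).
  field. repeat split; first [apply INR_fact_neq_0 | exact Hl | nz].
Qed.

Lemma sum_Sn_R (a : nat -> R) n : sum_n a (S n) = sum_n a n + a (S n).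
Proof. rewrite sum_Sn. reflexivity. Qed.

Lemma harm_S lam p n : harm lam p (S n) = harm lam p n + zcoef lam (S n) / INR (S n) ^ p.
Proof. reflexivity. Qed.

Lemma term_eq lam p k : INR (S k) * zeta_term lam (p + 1) (S k) = zcoef lam (S k) / INR (S k) ^ p.
Proof.
  unfold zeta_term. rewrite pow_add, pow_1. field. pose proof (INRS_pos k).
  split; [|lra]. apply pow_nonzero; lra.
Qed.

Lemma harm_eq lam p n :
  harm lam p (S n) = sum_n (fun k => INR (S k) * zeta_term lam (p + 1) (S k)) n.
Proof.
  induction n.
  - rewrite sum_O, term_eq. simpl. ring.
  - rewrite sum_Sn_R, <- IHn, term_eq. reflexivity.
Qed.

Lemma kron (b : nat -> R) l : is_series b l ->
  is_lim_seq (fun N => sum_n (fun k => INR (S k) * b k) N / INR (S N)) 0.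
Proof.
  intro Hb.
  assert (Hid : forall N, sum_n (fun k => INR (S k) * b k) N
     = INR (S (S N)) * sum_n b N - sum_n (sum_n b) N).
  { induction N.
    - rewrite !sum_O. rewrite !S_INR. simpl. ring.
    - rewrite !sum_Sn_R, IHN. rewrite !S_INR. toR. ring. }
  assert (H1 : is_lim_seq (sum_n b) l) by exact Hb.
  assert (H2 : is_lim_seq (fun N => INR (S (S N)) / INR (S N)) 1).
  { assert (H := lim_invS).
    apply (is_lim_seq_plus' (fun _ => 1)) with (l1 := 1) in H; [|apply is_lim_seq_const].
    replace (1 + 0) with 1 in H by ring.
    eapply is_lim_seq_ext; [|exact H]. intro n. rewrite (S_INR (S n)). field. nz. }
  assert (H3 : is_lim_seq (fun N => sum_n (sum_n b) N / INR (S N)) l).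
  { assert (C := Cesaro_1 (sum_n b) l (proj1 (is_lim_seq_Reals _ _) H1)).
    apply is_lim_seq_Reals in C. apply is_lim_seq_incr_1 in C.
    eapply is_lim_seq_ext; [|exact C]. intro n. simpl. rewrite sum_n_Reals. reflexivity. }
  pose proof (is_lim_seq_minus' _ _ _ _ (is_lim_seq_mult' _ _ _ _ H2 H1) H3) as H.
  replace (1 * l - l) with 0 in H by ring.
  eapply is_lim_seq_ext; [|exact H]. intro n. rewrite Hid. toR. field. nz.
Qed.

Lemma p1_id lam p N :
  sum_n (fun n => harm lam p (S n) / (INR (S n) * INR (S n + 1))) N
  = sum_n (fun n => zeta_term lam (p + 1) (S n)) N - harm lam p (S N) / INR (S (S N)).
Proof.
  assert (E : forall n, INR (S n + 1) = INR (S (S n))) by (intro; f_equal; lia).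
  induction N.
  - rewrite !sum_O. cbv beta. rewrite E. rewrite (harm_S lam p 0). unfold zeta_term.
    cbn [harm]. rewrite pow_add, pow_1. rewrite INR_1, pow1. replace (INR 2) with 2 by (simpl; lra). toR. field.
  - rewrite !sum_Sn_R, IHN. cbv beta. rewrite E. rewrite (harm_S lam p (S N)).
    unfold zeta_term. rewrite pow_add, pow_1. rewrite !S_INR. toR. field. nz.
Qed.

Lemma part1 lam p : ex_series (fun n => zeta_term lam (p + 1) (S n)) ->
   is_series (fun n => harm lam p (S n) / (INR (S n) * INR (S n + 1)))
             (zeta_lam lam (p + 1)).
Proof.
  intro Hex.
  pose proof (Series_correct _ Hex) as Hs.
  pose proof (kron _ _ Hs) as K.
  assert (K2 : is_lim_seq (fun N => harm lam p (S N) / INR (S N)) 0).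
  { eapply is_lim_seq_ext; [|exact K]. intro n. cbv beta. rewrite harm_eq. reflexivity. }
  pose proof (is_lim_seq_mult' _ _ _ _ K2 (lim_ratio 1)) as K3.
  assert (H1 : is_lim_seq (sum_n (fun n => zeta_term lam (p + 1) (S n))) (Series (fun n => zeta_term lam (p + 1) (S n)))) by exact Hs.
  pose proof (is_lim_seq_minus' _ _ _ _ H1 K3) as H.
  replace (Series (fun n => zeta_term lam (p + 1) (S n)) - 0 * 1) with (zeta_lam lam (p+1)) in H
    by (unfold zeta_lam; ring).
  change (is_lim_seq (sum_n (fun n => harm lam p (S n) / (INR (S n) * INR (S n + 1)))) (zeta_lam lam (p + 1))).
  eapply is_lim_seq_ext; [|exact H]. intro n. cbv beta. rewrite p1_id.
  replace (S n + 1)%nat with (S (S n)) by lia. toR. field. nz.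
Qed.

Definition cq lam q j := zcoef lam (S j) / (INR (S j) ^ q * INR (S (S j))).

Lemma p2_id lam p N :
  2 * sum_n (fun n => harm lam p (S n) / (INR (S n) * INR (S n + 2))) N
  = sum_n (fun n => zeta_term lam (p + 1) (S n)) N + sum_n (cq lam p) N
    - harm lam p (S N) / INR (S (S N)) - harm lam p (S N) / INR (S (S (S N))).
Proof.
  assert (E : forall n, INR (S n + 2) = INR (S (S (S n)))) by (intro; f_equal; lia).
  induction N.
  - rewrite !sum_O. cbv beta. rewrite E. rewrite (harm_S lam p 0). unfold zeta_term, cq.
    cbn [harm]. rewrite pow_add, pow_1.
    rewrite INR_1, pow1. replace (INR 2) with 2 by (simpl; lra).
    replace (INR 3) with 3 by (simpl; lra). toR. field.
  - rewrite !sum_Sn_R, Rmult_plus_distr_l, IHN. cbv beta. rewrite E. rewrite (harm_S lam p (S N)).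
    unfold zeta_term, cq. rewrite pow_add, pow_1. rewrite !S_INR. toR. field. nz.
Qed.

Lemma Fstep lam q : (1 <= q)%nat ->
  sum_n_m (fun k => (-1) ^ k * zeta_lam lam (S q + 2 - k)) 2 (S q)
  = zeta_lam lam (S q) - sum_n_m (fun k => (-1) ^ k * zeta_lam lam (q + 2 - k)) 2 q.
Proof.
  intro Hq.
  rewrite sum_Sn_m by lia.
  rewrite <- sum_n_m_S.
  rewrite (sum_n_m_ext _ (fun k => mult (-1) ((-1) ^ k * zeta_lam lam (q + 2 - k)))).
  2:{ intro k. replace (S q + 2 - S k)%nat with (q + 2 - k)%nat by lia.
      change ((-1) ^ (S k)) with (-1 * (-1) ^ k). unfold mult; simpl. ring. }
  rewrite sum_n_m_mult_l.
  replace (S q + 2 - 2)%nat with (S q) by lia.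
  unfold plus, mult; simpl. set (s := sum_n_m _ 2 q). set (z := zeta_lam lam (S q)). clearbody s. change (Ring.sort R_Ring) with R in s. toR. ring.
Qed.

Lemma is_series_minus_R (a b : nat -> R) la lb :
  is_series a la -> is_series b lb -> is_series (fun n => a n - b n) (la - lb).
Proof. intros. exact (is_series_minus _ _ _ _ H H0). Qed.

Lemma base lam : lam <> 0 -> ex_series (fun n => zeta_term lam 2 (S n)) ->
  is_series (cq lam 1) (/ (lam + 1)).
Proof.
  intros Hl Hex.
  set (b2 := fun n => zeta_term lam 2 (S n)) in *.
  destruct (INR_archimed 1 lam ltac:(lra)) as [M HM]. rewrite Rmult_1_r in HM.
  assert (Hf : forall j, (M <= j)%nat -> 0 < 1 - lam / INR (S j)).
  { intros j Hj. apply le_INR in Hj. rewrite S_INR.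
    replace (1 - lam / (INR j + 1)) with ((INR j + 1 - lam) * / (INR j + 1)) by (field; nz).
    apply Rmult_lt_0_compat; [lra|]. apply Rinv_0_lt_compat. posall; lra. }
  assert (Hsg : forall k, (0 <= zcoef lam (S M) -> 0 <= zcoef lam (S (M + k)))
                     /\ (zcoef lam (S M) <= 0 -> zcoef lam (S (M + k)) <= 0)).
  { induction k.
    - rewrite Nat.add_0_r. split; auto.
    - replace (S (M + S k)) with (S (S (M + k))) by lia. rewrite zcS by exact Hl.
      pose proof (Hf (M + k)%nat ltac:(lia)). destruct IHk as [A B].
      split; intro Hz; [specialize (A Hz) | specialize (B Hz)]; nra. }
  assert (Habs : ex_series (fun k => Rabs (b2 (M + k)%nat))).
  { apply (ex_series_incr_n b2 M) in Hex.
    destruct (Rle_dec 0 (zcoef lam (S M))) as [Hp|Hn].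
    - eapply ex_series_ext; [|exact Hex]. intro k. cbv beta. rewrite Rabs_pos_eq; [reflexivity|].
      unfold b2, zeta_term. apply Rdiv_le_0_compat; [apply (proj1 (Hsg k)); exact Hp | apply pow_lt, INRS_pos].
    - apply ex_series_opp in Hex. eapply ex_series_ext; [|exact Hex]. intro k. cbv beta.
      rewrite Rabs_left1; [reflexivity|].
      unfold b2, zeta_term. pose proof (proj2 (Hsg k) ltac:(lra)).
      pose proof (Rinv_0_lt_compat _ (pow_lt _ 2 (INRS_pos (M + k)))). unfold Rdiv. nra. }
  assert (Hc : ex_series (cq lam 1)).
  { apply (ex_series_incr_n _ M). eapply (@ex_series_le R_AbsRing R_CompleteNormedModule); [|exact Habs]. intro k.
    change (norm (cq lam 1 (M+k)%nat)) with (Rabs (cq lam 1 (M+k)%nat)).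
    set (j := (M+k)%nat). unfold b2, zeta_term, cq.
    replace (zcoef lam (S j) / (INR (S j) ^ 1 * INR (S (S j))))
      with (zcoef lam (S j) / INR (S j) ^ 2 * (INR (S j) / INR (S (S j)))) by (field; nz).
    rewrite Rabs_mult.
    pose proof (INRS_pos j). rewrite (S_INR (S j)). set (x := INR (S j)) in *.
    rewrite (Rabs_pos_eq (x / (x + 1))) by (apply Rdiv_le_0_compat; lra).
    replace (x / (x + 1)) with (1 - / (x + 1)) by (field; lra).
    pose proof (Rinv_0_lt_compat (x + 1) ltac:(lra)).
    pose proof (Rabs_pos (zcoef lam (S j) / x ^ 2)). change (Rabs (zcoef lam (S (M+k)) / INR (S (M+k)) ^ 2)) with (Rabs (zcoef lam (S j) / x ^ 2)). nra. }
  set (E1 := Series (cq lam 1)). pose proof (Series_correct _ Hc) as HE.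
  assert (Hid : forall N, (1 + lam) * sum_n (cq lam 1) N = 1 - zcoef lam (S (S N)) / INR (S (S N))).
  { induction N.
    - rewrite sum_O. unfold cq. rewrite zcS, zc1 by exact Hl. rewrite INR_1.
      replace (INR 2) with 2 by (simpl; lra). toR. field.
    - rewrite sum_Sn_R, Rmult_plus_distr_l, IHN. unfold cq. rewrite (zcS lam (S N)) by exact Hl.
      rewrite !S_INR. toR. field. nz. }
  set (d := fun j => zcoef lam (S j) / INR (S j)).
  assert (Hd : is_lim_seq d (1 - (1 + lam) * E1)).
  { apply is_lim_seq_incr_1.
    assert (HE' : is_lim_seq (sum_n (cq lam 1)) E1) by exact HE.
    pose proof (is_lim_seq_minus' _ _ _ _ (is_lim_seq_const 1)
                 (is_lim_seq_mult' _ _ _ _ (is_lim_seq_const (1 + lam)) HE')) as H.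
    eapply is_lim_seq_ext; [|exact H]. intro n. cbv beta. rewrite Hid. unfold d. toR. ring. }
  assert (Hc1 : is_lim_seq (fun N => sum_n d N / INR (S N)) (1 - (1 + lam) * E1)).
  { pose proof (Cesaro_1 d _ (proj1 (is_lim_seq_Reals _ _) Hd)) as C.
    apply is_lim_seq_Reals in C. apply is_lim_seq_incr_1 in C.
    eapply is_lim_seq_ext; [|exact C]. intro n. cbv beta. rewrite sum_n_Reals. reflexivity. }
  pose proof (kron _ _ (Series_correct _ Hex)) as K.
  assert (K2 : is_lim_seq (fun N => sum_n d N / INR (S N)) 0).
  { eapply is_lim_seq_ext; [|exact K]. intro n. cbv beta. f_equal. apply sum_n_ext.
    intro k. unfold b2, zeta_term, d. toR. field. nz. }
  assert (L0 : 1 - (1 + lam) * E1 = 0).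
  { pose proof (is_lim_seq_unique _ _ Hc1) as U1. pose proof (is_lim_seq_unique _ _ K2) as U2.
    rewrite U1 in U2. injection U2. auto. }
  assert (Hl1 : lam + 1 <> 0) by (intro Z; nra).
  replace (/ (lam + 1)) with E1; [exact HE|].
  apply (Rmult_eq_reg_l (lam + 1)); [|exact Hl1]. rewrite Rinv_r by exact Hl1. lra.
Qed.

Lemma Elem lam p : lam <> 0 ->
  (forall s : nat, (2 <= s <= p + 1)%nat -> ex_series (fun n => zeta_term lam s (S n))) ->
  forall q, (1 <= q)%nat -> (q <= p)%nat ->
  is_series (cq lam q)
    (sum_n_m (fun k => (-1) ^ k * zeta_lam lam (q + 2 - k)) 2 q + (-1) ^ (q + 1) / (lam + 1)).
Proof.
  intros Hl Hs. induction q; intros H1 H2; [lia|].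
  assert (Hv : forall l l', is_series (cq lam (S q)) l -> l = l' -> is_series (cq lam (S q)) l')
    by (intros; subst; auto).
  destruct q.
  - rewrite sum_n_m_zero by lia. eapply Hv. apply (base lam Hl (Hs 2%nat ltac:(lia))).
    unfold zero; simpl. unfold Rdiv. ring.
  - pose proof (is_series_minus_R _ _ _ _ (Series_correct _ (Hs (S (S q)) ltac:(lia)))
                  (IHq ltac:(lia) ltac:(lia))) as H.
    eapply Hv. { eapply is_series_ext; [|exact H]. intro n. cbv beta. unfold cq, zeta_term.
      rewrite (S_INR (S n)).
      change (INR (S n) ^ S (S q)) with (INR (S n) * INR (S n) ^ (S q)). toR. field. nz. }
    rewrite (Fstep lam (S q)) by lia.
    replace (S (S q) + 1)%nat with (S (S q + 1)) by lia.
    change ((-1) ^ (S (S q + 1))) with (-1 * (-1) ^ (S q + 1)).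
    unfold zeta_lam.
    set (F := sum_n_m _ 2 (S q)). clearbody F. toR. unfold Rdiv. ring.
Qed.

Theorem theorem5 (lam : R) (p : nat) :
  lam <> 0 -> (1 <= p)%nat ->
  (ex_series (fun n => zeta_term lam (p + 1) (S n)) ->
   is_series (fun n => harm lam p (S n) / (INR (S n) * INR (S n + 1)))
             (zeta_lam lam (p + 1)))
  /\
  ((forall s : nat, (2 <= s <= p + 1)%nat ->
      ex_series (fun n => zeta_term lam s (S n))) ->
   is_series (fun n => harm lam p (S n) / (INR (S n) * INR (S n + 2)))
     (/ 2 * (zeta_lam lam (p + 1)
             + sum_n_m (fun k => (-1) ^ k * zeta_lam lam (p + 2 - k)) 2 p
             + (-1) ^ (p + 1) / (lam + 1)))).
Proof.
  intros Hl Hp. split; [apply part1|].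
  intro Hs.
  pose proof (Series_correct _ (Hs (p + 1)%nat ltac:(lia))) as HB.
  pose proof (Elem lam p Hl Hs p Hp (le_n p)) as HC.
  pose proof (kron _ _ HB) as K.
  assert (K2 : is_lim_seq (fun N => harm lam p (S N) / INR (S N)) 0).
  { eapply is_lim_seq_ext; [|exact K]. intro n. cbv beta. rewrite harm_eq. reflexivity. }
  pose proof (is_lim_seq_mult' _ _ _ _ K2 (lim_ratio 1)) as K3.
  pose proof (is_lim_seq_mult' _ _ _ _ K2 (lim_ratio 2)) as K4.
  assert (HB' : is_lim_seq (sum_n (fun n => zeta_term lam (p + 1) (S n)))
                  (Series (fun n => zeta_term lam (p + 1) (S n)))) by exact HB.
  assert (HC' : is_lim_seq (sum_n (cq lam p))
     (sum_n_m (fun k => (-1) ^ k * zeta_lam lam (p + 2 - k)) 2 p + (-1) ^ (p + 1) / (lam + 1)))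
     by exact HC.
  pose proof (is_lim_seq_mult' _ _ _ _ (is_lim_seq_const (/ 2))
    (is_lim_seq_minus' _ _ _ _ (is_lim_seq_minus' _ _ _ _ (is_lim_seq_plus' _ _ _ _ HB' HC') K3) K4)) as H.
  change (is_lim_seq (sum_n (fun n => harm lam p (S n) / (INR (S n) * INR (S n + 2))))
     (/ 2 * (zeta_lam lam (p + 1)
             + sum_n_m (fun k => (-1) ^ k * zeta_lam lam (p + 2 - k)) 2 p
             + (-1) ^ (p + 1) / (lam + 1)))).
  assert (Hv : forall (u : nat -> R) (l l' : R), is_lim_seq u l -> l = l' -> is_lim_seq u l')
    by (intros; subst; auto).
  eapply Hv.
  { eapply is_lim_seq_ext; [|exact H]. intro n. cbv beta.
    pose proof (p2_id lam p n) as P.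
    replace (S n + 1)%nat with (S (S n)) by lia.
    replace (S n + 2)%nat with (S (S (S n))) by lia.
    apply (Rmult_eq_reg_l 2); [|lra]. toR. rewrite P. field. nz. }
  unfold zeta_lam. set (F := sum_n_m _ 2 p). clearbody F. toR. ring.
Qed.
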